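(* For $x\in\mathfrak S_G$, $W\in S_\infty(G)\times S_\infty(G)$ and $c\in[G]$, the quantity $[p_n(xW)](c)-[p_n(x)](c)$ does not depend on $n$, provided $n$ is large enough that $W\in S_n(G)\times S_n(G)$. (Its common value is denoted $C_c(x,W)$.)
   Context: $G$ compact; $[G]$ its conjugacy classes. $S_n(G)=G^n\rtimes S_n$, elements $((g_1,\dots,g_n),s)$, product $((g_i),s)((h_i),t)=((g_ih_{s^{-1}(i)}),st)$. For $x=((g_i),s)$, the color of a cycle $(i_1\cdots i_r)$ of $s$ is the conjugacy class of $g_{i_r}\cdots g_{i_1}$; $[x](c)$ = number of cycles of color $c$. Canonical projection $p_{n,n+1}:S_{n+1}(G)\to S_n(G)$: for $\tilde x=((g_1,\dots,g_{n+1}),\tilde s)$, if $\tilde s(n+1)=n+1$, restrict; if $n+1$ lies in a cycle $i_1\to\cdots\to i_m\to n+1\to i_{m+1}\to\cdots\to i_r$, delete $n+1$ from the cycle and replace $(g_1,\dots,g_{n+1})$ by $(g_1,\dots,g_n)$ with $g_{i_{m+1}}$ replaced by $g_{i_{m+1}}g_{n+1}$. $\mathfrak S_G=\varprojlim S_n(G)$ is the set of sequences $x=(x_1,x_2,\dots)$, $x_n\in S_n(G)$, $p_{n,n+1}(x_{n+1})=x_n$; $p_n(x)=x_n$. $S_\infty(G)=\bigcup_nS_n(G)$ via $((g_1,\dots,g_n),s)\mapsto((g_1,\dots,g_n,e_G),s)$. For $W=(w_1,w_2)\in S_\infty(G)\times S_\infty(G)$, $xW=y$ with $y_n=w_2^{-1}x_nw_1$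 for all $n$ such that $w_1,w_2\in S_n(G)$. *)

(* Defs.v *)
From HB Require Import structures.
From mathcomp Require Import all_boot all_order all_fingroup.
From mathcomp Require Import boolp classical_sets topology.
Set Implicit Arguments.
Unset Strict Implicit.
Unset Printing Implicit Defensive.

Local Open Scope classical_set_scope.

Section CompactGroup.
Variables (G : topologicalType) (mul : G -> G -> G) (inv : G -> G) (e : G).

Definition compact_group : Prop :=
  [/\ (forall a b c, mul a (mul b c) = mul (mul a b) c),
      (forall a, mul e a = a /\ mul a e = a),
      (forall a, mul (inv a) a = e /\ mul a (inv a) = e),
      continuous (fun p : G * G => mul p.1 p.2) /\ continuous inv
    & hausdorff_space G /\ compact [set: G]].

Definition conj_class (c : set G) : Prop :=
  exists a, c = [set b | exists h, b = mul (mul h a) (inv h)].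
End CompactGroup.

(* S_n(G) = G^n \rtimes S_n : elements ((g_1,..,g_n), s). *)
Definition Sn (G : Type) (n : nat) : Type := ({ffun 'I_n -> G} * 'S_n)%type.

Section Wreath.
Variables (G : Type) (mul : G -> G -> G) (inv : G -> G) (e : G).

(* ((g_i),s)((h_i),t) = ((g_i h_{s^{-1}(i)}), st), with st = s o t. *)
Definition smul n (x y : Sn G n) : Sn G n :=
  ([ffun i => mul (x.1 i) (y.1 ((x.2)^-1%g i))], (y.2 * x.2)%g).

Definition sinv n (x : Sn G n) : Sn G n :=
  ([ffun i => inv (x.1 (x.2 i))], (x.2)^-1%g).

Fixpoint cycprod n (g : {ffun 'I_n -> G}) (s : 'S_n) (i : 'I_n) (k : nat) : G :=
  match k with
  | 0 => e
  | k'.+1 => mul (g ((s ^+ k')%g i)) (cycprod g s i k')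
  end.

(* colour of the cycle of s through i (starting at i_1 = i):
   g_{i_r} ... g_{i_1}, an element whose conjugacy class is the colour. *)
Definition cycle_elt n (x : Sn G n) (i : 'I_n) : G :=
  cycprod x.1 x.2 i #|porbit x.2 i|.

(* [x](c) : number of cycles of x of colour c. *)
Definition ncol n (x : Sn G n) (c : set G) : nat :=
  #|[set O in porbits x.2 | `[< exists2 i, i \in O & c (cycle_elt x i) >]]|.

Definition proj_perm_fun n (s : 'S_n.+1) (i : 'I_n) : 'I_n :=
  let j := s (lift ord_max i) in
  let k := if j == ord_max then s ord_max else j in
  odflt i (unlift ord_max k).

Lemma proj_perm_key n (s : 'S_n.+1) (i : 'I_n) :
  lift ord_max (proj_perm_fun s i) =
  (if s (lift ord_max i) == ord_max then s ord_max else s (lift ord_max i)).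
Proof.
rewrite /proj_perm_fun.
have ne : (if s (lift ord_max i) == ord_max then s ord_max else s (lift ord_max i))
          != ord_max.
  case: (boolP (s (lift ord_max i) == ord_max)) => [/eqP E|//].
  apply/eqP => E2; have /negP := neq_lift (@ord_max n) i; apply.
  by apply/eqP; apply: (@perm_inj _ s); rewrite E2 E.
by case: unliftP ne => [j -> //|-> ]; rewrite eqxx.
Qed.

Lemma proj_perm_inj n (s : 'S_n.+1) : injective (proj_perm_fun s).
Proof.
move=> i1 i2 E.
have := congr1 (lift ord_max) E; rewrite !proj_perm_key.
have nm i : lift ord_max i != (@ord_max n) by rewrite eq_sym neq_lift.
case: (boolP (s (lift ord_max i1) == ord_max)) => [/eqP E1|N1];
  case: (boolP (s (lift ord_max i2) == ord_max)) => [/eqP E2|N2] E3.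
- by apply: (@lift_inj _ ord_max); apply: (@perm_inj _ s); rewrite E1 E2.
- by move: (nm i2); rewrite -(perm_inj E3) eqxx.
- by move: (nm i1); rewrite (perm_inj E3) eqxx.
- by apply: (@lift_inj _ ord_max); apply: (@perm_inj _ s).
Qed.

Definition proj_perm n (s : 'S_n.+1) : 'S_n := perm (@proj_perm_inj n s).

Definition proj n (x : Sn G n.+1) : Sn G n :=
  let g := x.1 in let s := x.2 in
  ([ffun i => if (s ord_max != ord_max) && (lift ord_max i == s ord_max)
              then mul (g (lift ord_max i)) (g ord_max)
              else g (lift ord_max i)], proj_perm s).

(* The inverse limit \mathfrak S_G: compatible sequences (x_n)_n. *)
Definition is_thread (x : forall n, Sn G n) : Prop :=
  forall n, proj (x n.+1) = x n.

Definition emb1 n (x : Sn G n) : Sn G n.+1 :=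
  ([ffun i => if unlift ord_max i is Some j then x.1 j else e],
   lift_perm ord_max ord_max x.2).

Fixpoint emb m k (x : Sn G m) : Sn G (k + m) :=
  match k with
  | 0 => x
  | k'.+1 => emb1 (emb k' x)
  end.

(* p_n(xW) for W = (w1,w2) in S_m(G) x S_m(G) and n = k + m >= m:
   w2^{-1} x_n w1. *)
Definition actW (x : forall n, Sn G n) m (w1 w2 : Sn G m) k : Sn G (k + m) :=
  smul (smul (sinv (emb k w2)) (x (k + m))) (emb k w1).

End Wreath.

(* Main.v *)
Require Import Defs.
From HB Require Import structures.
From mathcomp Require Import all_boot all_order all_fingroup all_algebra.
From mathcomp Require Import boolp classical_sets topology.
Set Implicit Arguments. Unset Strict Implicit. Unset Printing Implicit Defensive.
Local Open Scope group_scope.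
Local Open Scope classical_set_scope.

Lemma permS (T : finType) (s : {perm T}) k x : (s ^+ k.+1) x = s ((s ^+ k) x).
Proof. by rewrite expgSr permM. Qed.

Lemma proj_step n (s : 'S_n.+1) i :
  lift ord_max (proj_perm s i) =
  (if s (lift ord_max i) == ord_max then s ord_max else s (lift ord_max i)).
Proof. by rewrite /proj_perm permE proj_perm_key. Qed.

Lemma liftM n (i : 'I_n) : lift ord_max i != ord_max.
Proof. by rewrite eq_sym neq_lift. Qed.

Lemma orbC_fwd n (s : 'S_n.+1) i j :
  j \in porbit (proj_perm s) i -> lift ord_max j \in porbit s (lift ord_max i).
Proof.
case/porbitP=> k ->; elim: k => [|k IH]; first by rewrite expg0 perm1 porbit_id.
rewrite permS proj_step; set a := ((proj_perm s) ^+ k)%g i in IH *.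
have E : porbit s (lift ord_max a) = porbit s (lift ord_max i) by apply/eqP; rewrite eq_porbit_mem.
rewrite -E; case: ifP => [/eqP h|_]; last by apply: (mem_porbit s 1).
rewrite -{1}h; have := mem_porbit s 2 (lift ord_max a); by rewrite !permS expg0 perm1.
Qed.

Lemma orbC_bwd n (s : 'S_n.+1) i j :
  lift ord_max j \in porbit s (lift ord_max i) -> j \in porbit (proj_perm s) i.
Proof.
case/porbitP=> k Ek.
suff [[a Ha Ea]|[Ea _]] : (exists2 a, a \in porbit (proj_perm s) i & (s ^+ k) (lift ord_max i) = lift ord_max a)
  \/ ((s ^+ k) (lift ord_max i) = ord_max /\ exists2 a, a \in porbit (proj_perm s) i & s (lift ord_max a) = ord_max).
- by rewrite -Ek in Ea; rewrite (lift_inj Ea).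
- by rewrite -Ek in Ea; move: (liftM j); rewrite Ea eqxx.
elim: k {Ek} => [|k [[a Ha Ea]|[Ea [a Ha Sa]]]].
- by left; exists i; rewrite ?porbit_id // expg0 perm1.
- rewrite permS Ea; case: (boolP (s (lift ord_max a) == ord_max)) => [/eqP h|h].
    by right; split=> //; exists a.
  left; exists (proj_perm s a); last by rewrite proj_step (negbTE h).
  have /eqP <- : porbit (proj_perm s) a == porbit (proj_perm s) i by rewrite eq_porbit_mem.
  exact: (mem_porbit _ 1).
- left; exists (proj_perm s a); last by rewrite permS Ea proj_step Sa eqxx.
  have /eqP <- : porbit (proj_perm s) a == porbit (proj_perm s) i by rewrite eq_porbit_mem.
  exact: (mem_porbit _ 1).
Qed.
Definition grp (G : Type) (mul : G -> G -> G) (inv : G -> G) (e : G) : Prop :=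
  [/\ (forall a b c, mul a (mul b c) = mul (mul a b) c),
      (forall a, mul e a = a /\ mul a e = a) &
      (forall a, mul (inv a) a = e /\ mul a (inv a) = e)].

Lemma grpP (G : topologicalType) mul inv (e : G) : compact_group mul inv e -> grp mul inv e.
Proof. by case=> *; split. Qed.

Lemma conjC_mem (G : Type) mul inv (e : G) (c : G -> Prop) : grp mul inv e ->
  (exists a, c = [set b | exists h, b = mul (mul h a) (inv h)]) ->
  forall h a, c a -> c (mul (mul h a) (inv h)).
Proof.
move=> [A U I] [a0 ->] h a [k ->]; exists (mul h k).
have invM : inv (mul h k) = mul (inv k) (inv h).
  have E1 : mul (mul h k) (mul (inv k) (inv h)) = e.
    by rewrite A -(A h k) (proj2 (I k)) (proj2 (U h)) (proj2 (I h)).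
  rewrite -[inv (mul h k)](proj2 (U _)) -E1 A (proj1 (I _)).
  by rewrite (proj1 (U _)).
by rewrite invM !A.
Qed.

Lemma conj_swap (G : Type) mul inv (e : G) (c : G -> Prop) : grp mul inv e ->
  (exists a, c = [set b | exists h, b = mul (mul h a) (inv h)]) ->
  forall a b, c (mul a b) -> c (mul b a).
Proof.
move=> gG Hc a b H; have := conjC_mem gG Hc b H.
case: gG => A U I.
by rewrite !A -(A _ b) (proj2 (I b)) (proj2 (U _)).
Qed.
Close Scope classical_set_scope.

Lemma cycprod_rot (G : Type) mul inv (e : G) n (g : {ffun 'I_n -> G}) (s : 'S_n) j k :
  grp mul inv e -> mul (cycprod mul e g s (s j) k) (g j) = cycprod mul e g s j k.+1.
Proof.
case=> A U I; elim: k => [|k IH] /=.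
  by rewrite expg0 perm1 (proj1 (U _)) (proj2 (U _)).
by rewrite -A IH /= -permM -expgS.
Qed.

Lemma iter_porbitX (T : finType) (s : {perm T}) x : (s ^+ #|porbit s x|) x = x.
Proof. by rewrite permX iter_porbit. Qed.

Lemma col_step (G : Type) mul inv (e : G) (c : G -> Prop) n (x : Sn G n) y :
  grp mul inv e -> (exists a, c = [set b | exists h, b = mul (mul h a) (inv h)]%classic) ->
  c (cycle_elt mul e x y) -> c (cycle_elt mul e x (x.2 y)).
Proof.
move=> gG Hc H; rewrite /cycle_elt.
have -> : porbit x.2 (x.2 y) = porbit x.2 y by have := porbit_perm x.2 1 y; rewrite expg1.
set r := #|porbit x.2 y| in H *.
have E := cycprod_rot x.1 x.2 y r gG; rewrite /= iter_porbitX in E.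
have := conjC_mem gG Hc (x.1 y) H; rewrite -E.
by case: gG => A U I; rewrite -A (proj2 (I _)) (proj2 (U _)).
Qed.

Lemma col_orbit (G : Type) mul inv (e : G) (c : G -> Prop) n (x : Sn G n) i j :
  grp mul inv e -> (exists a, c = [set b | exists h, b = mul (mul h a) (inv h)]%classic) ->
  j \in porbit x.2 i -> c (cycle_elt mul e x i) -> c (cycle_elt mul e x j).
Proof.
move=> gG Hc /porbitP [k ->]; elim: k => [|k IH] H; first by rewrite expg0 perm1.
by rewrite permS; apply: (col_step gG Hc); apply: IH.
Qed.

Lemma col_porbit (G : Type) mul inv (e : G) (c : G -> Prop) n (x : Sn G n) i :
  grp mul inv e -> (exists a, c = [set b | exists h, b = mul (mul h a) (inv h)]%classic) ->
  `[< exists2 j, j \in porbit x.2 i & c (cycle_elt mul e x j) >] = `[< c (cycle_elt mul e x i) >].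
Proof.
move=> gG Hc; apply/asboolP/asboolP => [[j Hj Cj]|Ci]; last by exists i => //; apply: porbit_id.
by apply: (col_orbit gG Hc _ Cj); rewrite porbit_sym.
Qed.

Lemma period (T : finType) (s : {perm T}) x j :
  0 < j -> j < #|porbit s x| -> (s ^+ j) x != x.
Proof.
move=> j0 jr; apply/eqP => E.
have U := uniq_traject_porbit s x.
have := nth_uniq x (_ : 0 < size (traject s x #|porbit s x|)) (_ : j < size _) U.
rewrite size_traject !nth_traject // ?(leq_ltn_trans (leq0n _) jr) //.
move=> /(_ isT jr); rewrite /= -permX E eqxx => /esym /eqP j00.
by rewrite -j00 in j0.
Qed.

Lemma fixed_orbit (T : finType) (s : {perm T}) x : s x = x -> porbit s x = [set x].
Proof.
move=> sx; apply/setP=> u; rewrite inE; apply/porbitP/eqP => [[k ->]|->].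
  by elim: k => [|k IH]; rewrite ?expg0 ?perm1 // permS IH sx.
by exists 0; rewrite expg0 perm1.
Qed.

Lemma orb_minus n (s : 'S_n.+1) i :
  porbit s (lift ord_max i) :\ ord_max = lift ord_max @: porbit (proj_perm s) i.
Proof.
apply/setP=> u; rewrite !inE; case: (unliftP ord_max u) => [j|] ->.
  by rewrite liftM (mem_imset _ _ (@lift_inj _ ord_max)); apply/idP/idP; [apply: orbC_bwd|apply: orbC_fwd].
rewrite eqxx /=; apply/esym/imsetP => -[j _ /eqP]; by rewrite eq_sym (negbTE (liftM j)).
Qed.

Lemma card_orb n (s : 'S_n.+1) i :
  #|porbit s (lift ord_max i)| = #|porbit (proj_perm s) i| + (ord_max \in porbit s (lift ord_max i)).
Proof.
rewrite (cardsD1 ord_max) addnC; congr (_ + _).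
by rewrite orb_minus card_imset //; apply: lift_inj.
Qed.

Lemma colour_eq (G : Type) mul inv (e : G) (c : G -> Prop) n (y : Sn G n.+1) i :
  grp mul inv e -> (exists a, c = [set b | exists h, b = mul (mul h a) (inv h)]%classic) ->
  c (cycle_elt mul e (proj mul y) i) <-> c (cycle_elt mul e y (lift ord_max i)).
Proof.
move=> gG Hc.
set s := y.2; set g := y.1; set t := proj_perm s.
set h := (proj mul y).1.
have hE a : h a = if (s ord_max != ord_max) && (lift ord_max a == s ord_max)
                  then mul (g (lift ord_max a)) (g ord_max) else g (lift ord_max a).
  by rewrite /h ffunE.
have tE : (proj mul y).2 = t by [].
case: (boolP (ord_max \in porbit s (lift ord_max i))) => HM; last first.
  have IV k : lift ord_max ((t ^+ k) i) = (s ^+ k) (lift ord_max i).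
    elim: k => [|k IH]; first by rewrite !expg0 !perm1.
    rewrite !permS proj_step IH; case: eqP => // E.
    by move: HM; rewrite -{1}E -permS mem_porbit.
  have CP k : cycprod mul e h t i k = cycprod mul e g s (lift ord_max i) k.
    elim: k => [|k IH] //=; rewrite IH hE IV.
    case: ifP => // /andP [_ /eqP E]; move: HM.
    have : (s ^+ k) (lift ord_max i) \in porbit s (lift ord_max i) by apply: mem_porbit.
    rewrite -eq_porbit_mem E => /eqP <-.
    by have := porbit_perm s 1 ord_max; rewrite expg1 => ->; rewrite porbit_id.
  rewrite /cycle_elt tE -/s card_orb (negbTE HM) addn0 CP; by [].
have sMM : s ord_max != ord_max.
  apply/eqP=> sM; move: HM; rewrite porbit_sym fixed_orbit // inE.
  by rewrite (negbTE (liftM i)).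
case: (unliftP ord_max (s ord_max)) => [b' Eb|EM]; last by rewrite EM eqxx in sMM.
have EO : porbit s ord_max = porbit s (lift ord_max i) by apply/eqP; rewrite eq_porbit_mem.
have Hb : lift ord_max b' \in porbit s (lift ord_max i).
  rewrite -Eb -EO; have := mem_porbit s 1 ord_max; by rewrite expg1.
have Hb' : b' \in porbit t i by apply: orbC_bwd.
suff : c (cycle_elt mul e (proj mul y) b') <-> c (cycle_elt mul e y (lift ord_max b')).
  move=> [H1 H2]; split=> H.
    apply: (col_orbit gG Hc _ (H1 (col_orbit gG Hc _ H))) => //.
    by rewrite porbit_sym.
  apply: (col_orbit gG Hc _ (H2 (col_orbit gG Hc _ H))) => //.
  by rewrite tE porbit_sym.
set b := lift ord_max b'.
have HMb : ord_max \in porbit s b by rewrite porbit_sym EO.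
have cb := card_orb s b'; rewrite HMb addn1 -/t -/b in cb.
set r := #|porbit t b'| in cb.
have srb : (s ^+ r) b = ord_max.
  apply: (@perm_inj _ s); rewrite -permS -cb iter_porbitX Eb //.
have nb j : 0 < j -> j <= r -> (s ^+ j) b != b.
  by move=> j0 jr; apply: period => //; rewrite cb ltnS.
have nM j : j < r -> (s ^+ j) b != ord_max.
  move=> jr; apply/eqP=> E; have := nb j.+1 isT jr.
  by rewrite permS E Eb eqxx.
have IV k : k < r -> lift ord_max ((t ^+ k) b') = (s ^+ k) b.
  elim: k => [|k IH] kr; first by rewrite !expg0 !perm1.
  rewrite !permS proj_step IH ?(ltnW kr) //.
  by rewrite -permS (negbTE (nM _ kr)).
have CP k : k < r -> cycprod mul e h t b' k.+1 = mul (cycprod mul e g s b k.+1) (g ord_max).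
  case: gG => A U I.
  elim: k => [|k IH] kr.
    rewrite /= !expg0 !perm1 hE sMM Eb eqxx /=.
    by rewrite (proj2 (U _)) (proj2 (U _)).
  have -> : cycprod mul e h t b' k.+2 = mul (h ((t ^+ k.+1) b')) (cycprod mul e h t b' k.+1) by [].
  have -> : cycprod mul e g s b k.+2 = mul (g ((s ^+ k.+1) b)) (cycprod mul e g s b k.+1) by [].
  rewrite IH ?(ltnW kr) // hE IV // -/b.
  rewrite Eb -/b (negbTE (nb k.+1 isT (ltnW kr))) andbF /=.
  by rewrite A.
have r0 : 0 < r by rewrite lt0n card_porbit_neq0.
have E1 : cycle_elt mul e (proj mul y) b' = mul (cycprod mul e g s b r) (g ord_max).
  rewrite /cycle_elt tE -/t -/r.
  by have := CP r.-1; rewrite prednK // leqnn => ->.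
have E2 : cycle_elt mul e y b = mul (g ord_max) (cycprod mul e g s b r).
  by rewrite /cycle_elt -/s cb /= srb.
rewrite E1 E2; split; exact: (conj_swap gG Hc).
Qed.

Lemma ncol_proj (G : Type) mul inv (e : G) (c : G -> Prop) n (y : Sn G n.+1) :
  grp mul inv e -> (exists a, c = [set b | exists h, b = mul (mul h a) (inv h)]%classic) ->
  ncol mul e y c = ncol mul e (proj mul y) c + ((y.2 ord_max == ord_max) && `[< c (y.1 ord_max) >]).
Proof.
move=> gG Hc.
set s := y.2; set g := y.1; set t := proj_perm s.
have tE : (proj mul y).2 = t by [].
rewrite /ncol tE -/s.
set Az := [set O in porbits t | _]; set Ay := [set O in porbits s | _].
pose Phi (O : {set 'I_n}) := [set u | [exists j in O, u \in porbit s (lift ord_max j)]].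
have PhiE i : Phi (porbit t i) = porbit s (lift ord_max i).
  apply/setP=> u; rewrite inE; apply/existsP/idP => [[j /andP [Hj Hu]]|Hu].
    have E : porbit s (lift ord_max j) == porbit s (lift ord_max i).
      by rewrite eq_porbit_mem; apply: orbC_fwd.
    by rewrite -(eqP E).
  by exists i; rewrite porbit_id.
have Hcol i : (porbit t i \in Az) = (porbit s (lift ord_max i) \in Ay).
  rewrite !inE !imset_f //=.
  have := col_porbit (proj mul y) i gG Hc; rewrite tE => ->.
  have := col_porbit y (lift ord_max i) gG Hc; rewrite -/s => ->.
  have [H1 H2] := colour_eq y i gG Hc; by apply/asboolP/asboolP.
have inj : {in Az &, injective Phi}.
  move=> O1 O2; rewrite !inE => /andP [/imsetP [i _ ->] _] /andP [/imsetP [j _ ->] _].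
  rewrite !PhiE => E; apply/eqP; rewrite eq_porbit_mem; apply: orbC_bwd.
  by rewrite -E porbit_id.
have HinA i : (porbit s (lift ord_max i) \in Phi @: Az) = (porbit s (lift ord_max i) \in Ay).
  apply/imsetP/idP => [[O HO E]|H]; last by exists (porbit t i); rewrite ?Hcol ?PhiE.
  move: (HO); rewrite inE => /andP [/imsetP [j _ EO] _]; move: HO.
  by rewrite E EO Hcol PhiE.
have sub : Phi @: Az \subset Ay.
  apply/fintype.subsetP=> O /imsetP [O' HO' ->]; move: (HO'); rewrite inE => /andP [/imsetP [j _ EO] _].
  by rewrite EO PhiE -HinA -PhiE imset_f // -EO.
set B := (_ && _).
have cM : s ord_max = ord_max -> (porbit s ord_max \in Ay) = `[< c (g ord_max) >].
  move=> sM; rewrite inE imset_f //=.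
  have := col_porbit y ord_max gG Hc; rewrite -/s => ->.
  rewrite /cycle_elt -/s fixed_orbit // cards1 /= expg0 perm1.
  by case: gG => _ U _; rewrite (proj2 (U _)).
have nM : s ord_max = ord_max -> porbit s ord_max \notin Phi @: Az.
  move=> sM; apply/imsetP => -[O' HO' E]; move: HO'; rewrite inE => /andP [/imsetP [j _ EO] _].
  move: E; rewrite EO PhiE fixed_orbit // => /setP /(_ (lift ord_max j)).
  by rewrite porbit_id inE (negbTE (liftM j)).
have Ay2 O : O \in Ay -> O \in Phi @: Az \/ (O = porbit s ord_max /\ B).
  move=> HO; move: (HO); rewrite inE => /andP [/imsetP [u _ Eu] _].
  case: (unliftP ord_max u) Eu => [i ->|->] Eu.
    by left; rewrite Eu HinA -Eu.
  case: (boolP (s ord_max == ord_max)) => [/eqP sM|sMM].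
    by right; split=> //; rewrite /B -/s sM eqxx /= -cM // -Eu.
  case: (unliftP ord_max (s ord_max)) => [b' Eb|EM]; last by rewrite EM eqxx in sMM.
  left; have : porbit s (s ord_max) = porbit s ord_max.
    by have := porbit_perm s 1 ord_max; rewrite expg1.
  by rewrite Eb Eu => E; rewrite -E HinA E -Eu.
case: (boolP B) => HB.
  have sM : s ord_max = ord_max by move: HB; rewrite /B -/s => /andP [/eqP].
  have -> : Ay = porbit s ord_max |: (Phi @: Az).
    apply/setP=> O; rewrite in_setU1; apply/idP/idP => [HO|/orP [/eqP ->|HO]].
    - by case: (Ay2 O HO) => [->|[-> _]]; rewrite ?eqxx ?orbT.
    - by rewrite cM //; move: HB; rewrite /B -/s => /andP [].
    - exact: (fintype.subsetP sub).
  by rewrite cardsU1 nM // card_in_imset // add1n addn1.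
have -> : Ay = Phi @: Az.
  apply/setP=> O; apply/idP/idP => [HO|HO]; last exact: (fintype.subsetP sub).
  by case: (Ay2 O HO) => [//|[_ HB']]; rewrite HB' in HB.
by rewrite card_in_imset // addn0.
Qed.

Lemma eq_permV (T : finType) (p : {perm T}) x w : (x == p^-1 w) = (p x == w).
Proof. by apply/eqP/eqP => [->|<-]; rewrite ?permKV ?permK. Qed.

Lemma liftpV_lift n (p : 'S_n) a :
  (lift_perm ord_max ord_max p)^-1 (lift ord_max a) = lift ord_max (p^-1 a).
Proof. by rewrite lift_permV lift_perm_lift. Qed.

Lemma liftpV_max n (p : 'S_n) :
  (lift_perm ord_max ord_max p)^-1 ord_max = ord_max.
Proof. by rewrite lift_permV lift_perm_id. Qed.

Lemma projQ n (s : 'S_n.+1) j :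
  let q := (proj_perm s)^-1 j in
  s (lift ord_max q) = if (s ord_max != ord_max) && (lift ord_max j == s ord_max)
                       then ord_max else lift ord_max j.
Proof.
move=> q; have := proj_step s q; rewrite /q permKV.
case: eqP => [E ->|NE ->]; last by rewrite (inj_eq perm_inj) (negbTE (liftM q)) andbF.
rewrite eqxx andbT; case: eqP => // E2.
by move: (liftM q); rewrite (perm_inj (etrans E (esym E2))) eqxx.
Qed.

Lemma emb1_lift (G : Type) (e : G) n (v : Sn G n) a : (emb1 e v).1 (lift ord_max a) = v.1 a.
Proof. by rewrite ffunE liftK. Qed.

Lemma emb1_max (G : Type) (e : G) n (v : Sn G n) : (emb1 e v).1 ord_max = e.
Proof. by rewrite ffunE unlift_none. Qed.

Lemma proj_wr (G : Type) mul inv (e : G) n (y : Sn G n.+1) (u v : Sn G n) :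
  grp mul inv e ->
  proj mul (smul mul (smul mul (sinv inv (emb1 e u)) y) (emb1 e v)) =
  smul mul (smul mul (sinv inv u) (proj mul y)) v.
Proof.
case=> A U I.
have inve : inv e = e by rewrite -[inv e](proj2 (U _)) (proj1 (I _)).
set z := smul mul _ _.
set sg := lift_perm ord_max ord_max u.2.
have z2 : forall w, z.2 w = sg^-1 (y.2 (lift_perm ord_max ord_max v.2 w)).
  by move=> w; rewrite /z /= !permM.
have z2M : z.2 ord_max = sg^-1 (y.2 ord_max) by rewrite z2 lift_perm_id.
have condE : (z.2 ord_max != ord_max) = (y.2 ord_max != ord_max).
  by rewrite z2M eq_sym eq_permV lift_perm_id eq_sym.
rewrite /proj; congr (_, _); last first.
  apply/permP => i; apply: (@lift_inj _ ord_max).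
  rewrite proj_step /= !permM !lift_perm_lift lift_perm_id -liftpV_lift proj_step.
  have Ew w : (sg^-1 w == ord_max) = (w == ord_max).
    by rewrite -{1}(liftpV_max u.2) (inj_eq perm_inj).
  by rewrite Ew; case: ifP.
apply/ffunP => i; rewrite !ffunE.
set j := u.2 i.
have Li : (lift ord_max i == z.2 ord_max) = (lift ord_max j == y.2 ord_max).
  by rewrite z2M eq_permV lift_perm_lift.
rewrite condE Li /=.
have /= Hq := projQ y.2 j; set q := _ j in Hq.
have -> : ((proj_perm y.2 * u.2^-1)^-1)%g i = q by rewrite invMg invgK permM.
rewrite !invMg !invgK !permM !lift_perm_lift !lift_perm_id !liftK !unlift_none -/j inve.
case: ifP Hq => C Hq.
  have E1 : y.2^-1 (lift ord_max j) = ord_max.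
    by case/andP: C => _ /eqP E; rewrite E permK.
  have E2 : y.2^-1 ord_max = lift ord_max q by rewrite -{1}Hq permK.
  rewrite E1 E2 unlift_none liftK (proj2 (U _)) (proj1 (U _)).
  by rewrite !A.
have E1 : y.2^-1 (lift ord_max j) = lift ord_max q by rewrite -Hq permK.
by rewrite E1 liftK.
Qed.

Lemma ind_wr (G : Type) mul inv (e : G) (c : G -> Prop) n (y : Sn G n.+1) (u v : Sn G n) :
  grp mul inv e ->
  let z := smul mul (smul mul (sinv inv (emb1 e u)) y) (emb1 e v) in
  (z.2 ord_max == ord_max) && `[< c (z.1 ord_max) >] =
  (y.2 ord_max == ord_max) && `[< c (y.1 ord_max) >].
Proof.
case=> A U I z.
have inve : inv e = e by rewrite -[inv e](proj2 (U _)) (proj1 (I _)).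
have -> : z.2 ord_max = (lift_perm ord_max ord_max u.2)^-1 (y.2 ord_max).
  by rewrite /z /= !permM lift_perm_id.
rewrite eq_sym eq_permV lift_perm_id eq_sym.
case: eqP => //= yM.
rewrite /z !ffunE /= !invMg !invgK !permM !lift_perm_id !unlift_none.
have -> : y.2^-1 ord_max = ord_max by rewrite -{1}yM permK.
by rewrite unlift_none inve (proj1 (U _)) (proj2 (U _)).
Qed.

Lemma step (G : Type) mul inv (e : G) (c : G -> Prop) n (y : Sn G n.+1) (x0 : Sn G n) (u v : Sn G n) :
  grp mul inv e -> (exists a, c = [set b | exists h, b = mul (mul h a) (inv h)]%classic) ->
  proj mul y = x0 ->
  ((ncol mul e (smul mul (smul mul (sinv inv (emb1 e u)) y) (emb1 e v)) c)%:Z - (ncol mul e y c)%:Z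
   = (ncol mul e (smul mul (smul mul (sinv inv u) x0) v) c)%:Z - (ncol mul e x0 c)%:Z)%R.
Proof.
move=> gG Hc Hy.
rewrite (ncol_proj _ gG Hc) proj_wr // Hy (ncol_proj y gG Hc) Hy ind_wr //.
by rewrite !PoszD GRing.opprD GRing.addrACA GRing.subrr GRing.addr0.
Qed.

Close Scope group_scope.
Unset Implicit Arguments.
Set Strict Implicit.

Theorem proposition4p2 (G : topologicalType) (mul : G -> G -> G) (inv : G -> G) (e : G)
  (HG : compact_group mul inv e)
  (x : forall n, Sn G n) (Hx : is_thread mul x)
  (m : nat) (w1 w2 : Sn G m)
  (c : set G) (Hc : conj_class mul inv c)
  (k1 k2 : nat) :
  ((ncol mul e (actW mul inv e x w1 w2 k1) c)%:Z - (ncol mul e (x (k1 + m)%N) c)%:Z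
   = (ncol mul e (actW mul inv e x w1 w2 k2) c)%:Z - (ncol mul e (x (k2 + m)%N) c)%:Z)%R.
Proof.
have gG := grpP HG.
have S k : ((ncol mul e (actW mul inv e x w1 w2 k.+1) c)%:Z - (ncol mul e (x (k.+1 + m)%N) c)%:Z
   = (ncol mul e (actW mul inv e x w1 w2 k) c)%:Z - (ncol mul e (x (k + m)%N) c)%:Z)%R.
  exact: (@step G mul inv e c (k + m) (x (k + m).+1) (x (k + m)) (emb e k w2) (emb e k w1) gG Hc (Hx _)).
have Z k : ((ncol mul e (actW mul inv e x w1 w2 k) c)%:Z - (ncol mul e (x (k + m)%N) c)%:Z
   = (ncol mul e (actW mul inv e x w1 w2 0) c)%:Z - (ncol mul e (x (0 + m)%N) c)%:Z)%R.
  by elim: k => // k IH; rewrite S.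
by rewrite Z (Z k2).
Qed.
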